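(* Let $T_{23}=\mathbf{e}^1_1\otimes(\mathbf{e}^2_1\otimes\mathbf{e}^3_1+\mathbf{e}^2_2\otimes\mathbf{e}^3_2+\mathbf{e}^2_3\otimes\mathbf{e}^3_3)+\mathbf{e}^1_2\otimes(\mathbf{e}^2_1\otimes\mathbf{e}^3_2+\mathbf{e}^2_2\otimes\mathbf{e}^3_3+\mathbf{e}^2_3\otimes\mathbf{e}^3_4)\in\mathbb{C}^2\otimes\mathbb{C}^3\otimes\mathbb{C}^4$ (a tensor of rank $4$). Put $\psi(\mathbf{a},\mathbf{b},\mathbf{c})=a_1b_1c_1+a_1b_2c_2+a_1b_3c_3+a_2b_3c_4$ and $\Delta(\mathbf{c})=-c_2^2c_3^2+4c_1c_3^3+4c_2^3c_4-18c_1c_2c_3c_4+27c_1^2c_4^2$. Then a rank-one tensor $P=\mathbf{a}\otimes\mathbf{b}\otimes\mathbf{c}$ lies in the decomposition locus of $T_{23}$ if and only if \[ b_2^2-b_1b_3=0,\quad a_2b_2-a_1b_3=0,\quad a_2b_1-a_1b_2=0,\quad \psi(\mathbf{a},\mathbf{b},\mathbf{c})\neq0,\quad \Delta(\mathbf{c})\neq 0. \]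
   Context: $\mathbf{e}^i_j$ is the $j$-th standard basis vector of the $i$-th factor and $\mathbf{a}=(a_1,a_2)$, $\mathbf{b}=(b_1,b_2,b_3)$, $\mathbf{c}=(c_1,\dots,c_4)$ are nonzero coordinate vectors. The rank of a tensor is the minimal number of rank-one tensors summing to it; $P$ is in the decomposition locus of $T$ if $\mathrm{rk}(T-\lambda P)=\mathrm{rk}(T)-1$ for some $\lambda\in\mathbb{C}$. *)

(* Defs.v *)
From mathcomp Require Import all_boot all_algebra.
From mathcomp Require Import Rstruct complex.
Set Implicit Arguments. Unset Strict Implicit. Unset Printing Implicit Defensive.
Import GRing.Theory.
Local Open Scope ring_scope.

Definition C : numClosedFieldType := (Rdefinitions.R)[i].

(* Vectors of C^n as coordinate functions ('I_n = {0,..,n-1}, so the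
   paper's index j corresponds to the ordinal j-1). *)
Definition vec (n : nat) := 'I_n -> C.

Definition tensor := 'I_2 -> 'I_3 -> 'I_4 -> C.

Definition outer (a : vec 2) (b : vec 3) (c : vec 4) : tensor :=
  fun i j k => a i * b j * c k.

Definition tadd (T S : tensor) : tensor := fun i j k => T i j k + S i j k.
Definition tscale (l : C) (T : tensor) : tensor := fun i j k => l * T i j k.
Definition tsub (T S : tensor) : tensor := tadd T (tscale (-1) S).

Definition ebasis (n : nat) (j : 'I_n) : vec n := fun i => (i == j)%:R.

Definition nonzero_vec n (v : vec n) : Prop := exists i, v i != 0.

Definition rank_le (T : tensor) (r : nat) : Prop :=
  exists (a : 'I_r -> vec 2) (b : 'I_r -> vec 3) (c : 'I_r -> vec 4),
    forall i j k, T i j k = \sum_(l < r) outer (a l) (b l) (c l) i j k.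

Definition has_rank (T : tensor) (r : nat) : Prop :=
  rank_le T r /\ forall s, rank_le T s -> (r <= s)%N.

Definition in_decomp_locus (T P : tensor) : Prop :=
  exists (lambda : C) (r : nat),
    has_rank T r /\ (0 < r)%N /\ has_rank (tsub T (tscale lambda P)) r.-1.

Definition e1 (j : nat) : 'I_2 := inord j.
Definition e2 (j : nat) : 'I_3 := inord j.
Definition e3 (j : nat) : 'I_4 := inord j.

Definition T23 : tensor :=
  fun i j k =>
      outer (ebasis (e1 0)) (ebasis (e2 0)) (ebasis (e3 0)) i j k
    + outer (ebasis (e1 0)) (ebasis (e2 1)) (ebasis (e3 1)) i j k
    + outer (ebasis (e1 0)) (ebasis (e2 2)) (ebasis (e3 2)) i j k
    + outer (ebasis (e1 1)) (ebasis (e2 0)) (ebasis (e3 1)) i j k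
    + outer (ebasis (e1 1)) (ebasis (e2 1)) (ebasis (e3 2)) i j k
    + outer (ebasis (e1 1)) (ebasis (e2 2)) (ebasis (e3 3)) i j k.

Definition psi (a : vec 2) (b : vec 3) (c : vec 4) : C :=
  a (e1 0) * b (e2 0) * c (e3 0) + a (e1 0) * b (e2 1) * c (e3 1)
  + a (e1 0) * b (e2 2) * c (e3 2) + a (e1 1) * b (e2 2) * c (e3 3).

Definition Delta (c : vec 4) : C :=
  let c1 := c (e3 0) in let c2 := c (e3 1) in
  let c3 := c (e3 2) in let c4 := c (e3 3) in
  - (c2 ^+ 2 * c3 ^+ 2) + 4 * c1 * c3 ^+ 3 + 4 * c2 ^+ 3 * c4
  - 18 * c1 * c2 * c3 * c4 + 27 * c1 ^+ 2 * c4 ^+ 2.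

(* Main.v *)
Require Import Defs.
From mathcomp Require Import all_boot all_algebra.
From mathcomp Require Import Rstruct complex.
From mathcomp Require Import ring.
Import GRing.Theory.
Local Open Scope ring_scope.

Notation i0 := (@Ordinal 2 0 isT).
Notation i1 := (@Ordinal 2 1 isT).
Notation j0 := (@Ordinal 3 0 isT).
Notation j1 := (@Ordinal 3 1 isT).
Notation j2 := (@Ordinal 3 2 isT).
Notation k0 := (@Ordinal 4 0 isT).
Notation k1 := (@Ordinal 4 1 isT).
Notation k2 := (@Ordinal 4 2 isT).
Notation k3 := (@Ordinal 4 3 isT).

Lemma e10 : e1 0 = i0. Proof. by apply/val_inj; rewrite /= inordK. Qed.
Lemma e11 : e1 1 = i1. Proof. by apply/val_inj; rewrite /= inordK. Qed.
Lemma e20 : e2 0 = j0. Proof. by apply/val_inj; rewrite /= inordK. Qed.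
Lemma e21 : e2 1 = j1. Proof. by apply/val_inj; rewrite /= inordK. Qed.
Lemma e22 : e2 2 = j2. Proof. by apply/val_inj; rewrite /= inordK. Qed.
Lemma e30 : e3 0 = k0. Proof. by apply/val_inj; rewrite /= inordK. Qed.
Lemma e31 : e3 1 = k1. Proof. by apply/val_inj; rewrite /= inordK. Qed.
Lemma e32 : e3 2 = k2. Proof. by apply/val_inj; rewrite /= inordK. Qed.
Lemma e33 : e3 3 = k3. Proof. by apply/val_inj; rewrite /= inordK. Qed.
Definition eE := (e10, e11, e20, e21, e22, e30, e31, e32, e33).

Lemma ord2P (i : 'I_2) : i = i0 \/ i = i1.
Proof. case: i => [[|[|n]] H]; [left|right|]; try exact/val_inj. by []. Qed.
Lemma ord3P (i : 'I_3) : [\/ i = j0, i = j1 | i = j2].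
Proof.
case: i => [[|[|[|n]]] H]; [apply: Or31|apply: Or32|apply: Or33|]; try exact/val_inj.
by [].
Qed.
Lemma ord4P (i : 'I_4) : [\/ i = k0, i = k1, i = k2 | i = k3].
Proof.
case: i => [[|[|[|[|n]]]] H]; [apply: Or41|apply: Or42|apply: Or43|apply: Or44|];
  try exact/val_inj.
by [].
Qed.

Lemma T23E i j k : T23 i j k = ((i + j)%N == k)%:R.
Proof.
rewrite /T23 !eE /outer /ebasis.
case: (ord2P i) => ->; case: (ord3P j) => [| |] ->;
  case: (ord4P k) => [| | |] -> /=; ring.
Qed.

Lemma sum4 (F : 'I_4 -> C) : \sum_(k < 4) F k = F k0 + F k1 + F k2 + F k3.
Proof.
rewrite !big_ord_recl big_ord0 addr0 !addrA.
have E (x y : 'I_4) : val x = val y -> F x = F y by move=> h; congr F; exact: val_inj.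
by rewrite (E ord0 k0) // (E (lift ord0 ord0) k1) // (E (lift ord0 (lift ord0 ord0)) k2) // (E (lift ord0 (lift ord0 (lift ord0 ord0))) k3).
Qed.

Definition decomp (T : tensor) s (A : 'I_s -> vec 2) (B : 'I_s -> vec 3) (Cf : 'I_s -> vec 4) :=
  forall i j k, T i j k = \sum_(l < s) outer (A l) (B l) (Cf l) i j k.

Definition cmx s (Cf : 'I_s -> vec 4) : 'M[C]_(4, s) := \matrix_(k, l) Cf l k.
Arguments decomp T {s}.
Arguments cmx {s}.

Lemma contract s A B Cf (x : 'rV[C]_4) i j : decomp T23 A B Cf ->
  \sum_(k < 4) x 0 k * T23 i j k =
  \sum_(l < s) A l i * B l j * (x *m cmx Cf) 0 l.
Proof.
move=> HT.
under eq_bigr do rewrite HT mulr_sumr.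
rewrite exchange_big /=; apply: eq_bigr => l _.
rewrite !mxE mulr_sumr; apply: eq_bigr => k _; rewrite /outer mxE; ring.
Qed.

Lemma flat_inj s A B Cf (x : 'rV[C]_4) : decomp T23 A B Cf ->
  x *m cmx (s:=s) Cf = 0 -> x = 0.
Proof.
move=> HT Hx.
have H i j : \sum_(k < 4) x 0 k * T23 i j k = 0.
  by rewrite (@contract s A B Cf x i j HT) Hx big1 // => l _; rewrite mxE mulr0.
apply/rowP => k; rewrite mxE.
case: (ord4P k) => [| | |] ->.
- by have := H i0 j0; rewrite sum4 !T23E /=; move=> <-; ring.
- by have := H i0 j1; rewrite sum4 !T23E /=; move=> <-; ring.
- by have := H i0 j2; rewrite sum4 !T23E /=; move=> <-; ring.
- by have := H i1 j2; rewrite sum4 !T23E /=; move=> <-; ring.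
Qed.
Lemma ker0 s (A : 'I_s -> vec 2) (B : 'I_s -> vec 3) (Cf : 'I_s -> vec 4) : decomp T23 A B Cf -> kermx (@cmx s Cf) = 0.
Proof.
move=> HT; apply/matrixP => i j.
have := @flat_inj s A B Cf (row i (kermx (cmx Cf))) HT.
rewrite -row_mul mulmx_ker row0 => /(_ erefl) /rowP /(_ j).
by rewrite !mxE.
Qed.

Lemma lower s (A : 'I_s -> vec 2) (B : 'I_s -> vec 3) (Cf : 'I_s -> vec 4) : decomp T23 A B Cf -> (4 <= s)%N.
Proof.
move=> HT; have := mxrank_ker (@cmx s Cf).
rewrite (@ker0 _ _ _ _ HT) mxrank0 => /eqP; rewrite eq_sym subn_eq0 => H.
exact: leq_trans H (rank_leq_col _).
Qed.

Lemma cmx_unit (A : 'I_4 -> vec 2) (B : 'I_4 -> vec 3) (Cf : 'I_4 -> vec 4) : decomp T23 A B Cf -> @cmx 4 Cf \in unitmx.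
Proof. by move=> HT; rewrite -row_free_unit -kermx_eq0 (@ker0 _ _ _ _ HT). Qed.

Lemma rank_le_decomp T s : rank_le T s <-> exists (A : 'I_s -> vec 2) (B : 'I_s -> vec 3) (Cf : 'I_s -> vec 4), decomp T A B Cf.
Proof. by []. Qed.
Definition pa (m n : C) : vec 2 := fun i => nth 0 [:: m; n] i.
Definition pb (m n : C) : vec 3 := fun j => nth 0 [:: m ^+ 2; m * n; n ^+ 2] j.
Definition cub (m1 n1 m2 n2 m3 n3 : C) : vec 4 := fun k =>
  nth 0 [:: - (n1 * n2 * n3); m1 * n2 * n3 + n1 * m2 * n3 + n1 * n2 * m3;
            - (m1 * m2 * n3 + m1 * n2 * m3 + n1 * m2 * m3); m1 * m2 * m3] k.
Definition ev (m n mu nu : C) := m * nu - n * mu.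
Definition wv (m1 n1 m2 n2 m3 n3 mu nu : C) : vec 4 := fun k =>
  cub m1 n1 m2 n2 m3 n3 k / (ev m1 n1 mu nu * ev m2 n2 mu nu * ev m3 n3 mu nu).

Lemma evC m n m' n' : ev m' n' m n = - ev m n m' n'.
Proof. rewrite /ev; ring. Qed.

Lemma lagrange m0 n0 m1 n1 m2 n2 m3 n3 :
  ev m0 n0 m1 n1 != 0 -> ev m0 n0 m2 n2 != 0 -> ev m0 n0 m3 n3 != 0 ->
  ev m1 n1 m2 n2 != 0 -> ev m1 n1 m3 n3 != 0 -> ev m2 n2 m3 n3 != 0 ->
  forall i j k, T23 i j k =
    outer (pa m0 n0) (pb m0 n0) (wv m1 n1 m2 n2 m3 n3 m0 n0) i j k +
    outer (pa m1 n1) (pb m1 n1) (wv m0 n0 m2 n2 m3 n3 m1 n1) i j k +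
    outer (pa m2 n2) (pb m2 n2) (wv m0 n0 m1 n1 m3 n3 m2 n2) i j k +
    outer (pa m3 n3) (pb m3 n3) (wv m0 n0 m1 n1 m2 n2 m3 n3) i j k.
Proof.
move=> h01 h02 h03 h12 h13 h23.
have h10 : ev m1 n1 m0 n0 != 0 by rewrite evC oppr_eq0.
have h20 : ev m2 n2 m0 n0 != 0 by rewrite evC oppr_eq0.
have h30 : ev m3 n3 m0 n0 != 0 by rewrite evC oppr_eq0.
have h21 : ev m2 n2 m1 n1 != 0 by rewrite evC oppr_eq0.
have h31 : ev m3 n3 m1 n1 != 0 by rewrite evC oppr_eq0.
have h32 : ev m3 n3 m2 n2 != 0 by rewrite evC oppr_eq0.
move: h01 h02 h03 h12 h13 h23 h10 h20 h30 h21 h31 h32; rewrite /ev => g01 g02 g03 g12 g13 g23 g10 g20 g30 g21 g31 g32.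
move=> i j k; rewrite T23E /outer /pa /pb /wv /cub /ev.
case: (ord2P i) => ->; case: (ord3P j) => [| |] ->;
  case: (ord4P k) => [| | |] -> /=.
all: field; by rewrite g01 g02 g03 g12 g13 g23 g10 g20 g30 g21 g31 g32.
Qed.
Import Num.Theory.

Definition fam3 {X} (x0 x1 x2 : X) : 'I_3 -> X := fun l => nth x0 [:: x0; x1; x2] l.
Definition fam4 {X} (x0 x1 x2 x3 : X) : 'I_4 -> X := fun l => nth x0 [:: x0; x1; x2; x3] l.

Lemma sum3 (F : 'I_3 -> C) : \sum_(k < 3) F k = F j0 + F j1 + F j2.
Proof.
rewrite !big_ord_recl big_ord0 addr0 !addrA.
have E (x y : 'I_3) : val x = val y -> F x = F y by move=> h; congr F; exact: val_inj.
by rewrite (E ord0 j0) // (E (lift ord0 ord0) j1) // (E (lift ord0 (lift ord0 ord0)) j2).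
Qed.

Lemma rank_le3 T a0 b0 c0 a1 b1 c1 a2 b2 c2 :
  (forall i j k, T i j k = outer a0 b0 c0 i j k + outer a1 b1 c1 i j k + outer a2 b2 c2 i j k) ->
  rank_le T 3.
Proof.
move=> H; exists (fam3 a0 a1 a2), (fam3 b0 b1 b2), (fam3 c0 c1 c2) => i j k.
by rewrite H sum3.
Qed.

Lemma rank_le4 T a0 b0 c0 a1 b1 c1 a2 b2 c2 a3 b3 c3 :
  (forall i j k, T i j k = outer a0 b0 c0 i j k + outer a1 b1 c1 i j k + outer a2 b2 c2 i j k
     + outer a3 b3 c3 i j k) ->
  rank_le T 4.
Proof.
move=> H; exists (fam4 a0 a1 a2 a3), (fam4 b0 b1 b2 b3), (fam4 c0 c1 c2 c3) => i j k.
by rewrite H sum4.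
Qed.

Lemma two_neq0 : (2 : C) != 0.
Proof. by rewrite pnatr_eq0. Qed.

Lemma rankT_le4 : rank_le T23 4.
Proof.
apply: rank_le4; apply: (@lagrange 1 0 0 1 1 1 1 (-1)); rewrite /ev;
  rewrite ?(mul1r, mulr1, mul0r, mulr0, subr0, sub0r, oppr_eq0, oner_eq0) //.
have -> : -1 - 1 = - (2:C) by ring.
by rewrite oppr_eq0 two_neq0.
Qed.

Lemma rankT : has_rank T23 4.
Proof.
split; first exact: rankT_le4.
by move=> s [A [B [Cf H]]]; apply: (@lower s A B Cf).
Qed.

Lemma rankT_uniq r : has_rank T23 r -> r = 4%N.
Proof.
case=> H1 H2; apply/eqP; rewrite eqn_leq (H2 _ rankT_le4) /=.
by case: rankT => _ /(_ r H1).
Qed.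

Definition ext {s} {X} (x0 : X) (f : 'I_s -> X) : 'I_s.+1 -> X :=
  fun l => match unlift ord0 l with Some l' => f l' | None => x0 end.

Lemma ext_decomp (T : tensor) (lam : C) a b c s :
  rank_le (tsub T (tscale lam (outer a b c))) s ->
  exists (A : 'I_s.+1 -> vec 2) (B : 'I_s.+1 -> vec 3) (Cf : 'I_s.+1 -> vec 4),
    [/\ decomp T A B Cf, A ord0 = (fun i => lam * a i), B ord0 = b & Cf ord0 = c].
Proof.
case=> A [B [Cf H]].
exists (ext (fun i => lam * a i) A), (ext b B), (ext c Cf); split;
  rewrite /ext ?unlift_none //.
move=> i j k; rewrite big_ord_recl /= unlift_none.
under eq_bigr do rewrite liftK.
rewrite -H /tsub /tadd /tscale /outer; ring.
Qed.

Lemma rank_sub_lower (lam : C) a b c s :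
  rank_le (tsub T23 (tscale lam (outer a b c))) s -> (3 <= s)%N.
Proof.
move=> /ext_decomp [A [B [Cf [H _ _ _]]]].
by have := @lower _ A B Cf H.
Qed.
Definition V (mu nu : C) : vec 4 := fun k => nth 0 [:: mu ^+ 3; mu ^+ 2 * nu; mu * nu ^+ 2; nu ^+ 3] k.
Definition dot (y z : vec 4) := \sum_(k < 4) y k * z k.

Lemma cubV mu nu m1 n1 m2 n2 m3 n3 :
  dot (V mu nu) (cub m1 n1 m2 n2 m3 n3) = ev m1 n1 mu nu * ev m2 n2 mu nu * ev m3 n3 mu nu.
Proof. rewrite /dot sum4 /V /cub /ev /=; ring. Qed.

Lemma Delta_cub g m1 n1 m2 n2 m3 n3 :
  Delta (fun k => g * cub m1 n1 m2 n2 m3 n3 k) =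
  - g ^+ 4 * (ev m1 n1 m2 n2 * ev m1 n1 m3 n3 * ev m2 n2 m3 n3) ^+ 2.
Proof. rewrite /Delta !eE /cub /ev /=; ring. Qed.
Lemma veron (y0 y1 y2 y3 a0 a1 b0 b1 b2 : C) :
  y0 = a0 * b0 -> y1 = a0 * b1 -> y1 = a1 * b0 -> y2 = a0 * b2 -> y2 = a1 * b1 ->
  y3 = a1 * b2 ->
  exists mu nu ka : C, ((mu != 0) || (nu != 0)) /\
    forall k : 'I_4, nth 0 [:: y0; y1; y2; y3] k = ka * V mu nu k.
Proof.
move=> E0 E1 E1' E2 E2' E3.
have [a00|a0n] := eqVneq a0 0.
  have [a10|a1n] := eqVneq a1 0.
    exists 1, 0, 0; split; first by rewrite oner_eq0.
    move=> k; rewrite mul0r; move: E0 E1 E2 E3; rewrite a00 a10 !mul0r => -> -> -> ->.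
    by case: k => [[|[|[|[|k]]]] ?].
  exists 0, a1, (b2 / a1 ^+ 2); split; first by rewrite a1n orbT.
  have hb0 : b0 = 0 by apply: (mulfI a1n); rewrite -E1' E1 a00 !mul0r mulr0.
  move=> k; case: k => [[|[|[|[|k]]]] ?] //=; rewrite /V /=.
  - by rewrite E0 a00; field.
  - by rewrite E1 a00; field.
  - by rewrite E2 a00; field.
  - by rewrite E3; field.
have hb1 : b1 = a1 * b0 / a0 by rewrite -E1' E1; field.
have hb2 : b2 = a1 * b1 / a0 by rewrite -E2' E2; field.
exists a0, a1, (b0 / a0 ^+ 2); split; first by rewrite a0n.
move=> k; case: k => [[|[|[|[|k]]]] ?] //=; rewrite /V /=.
- by rewrite E0; field.
- by rewrite E1' ; field.
- by rewrite E2' hb1; field.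
- by rewrite E3 hb2 hb1; field.
Qed.

Lemma indep (y y' z z' : vec 4) mu nu ka mu' nu' ka' :
  (mu != 0) || (nu != 0) ->
  (forall k, y k = ka * V mu nu k) -> (forall k, y' k = ka' * V mu' nu' k) ->
  dot y z = 1 -> dot y' z = 0 -> dot y' z' = 1 -> ev mu nu mu' nu' != 0.
Proof.
move=> Hp Hy Hy' Hyz Hy'z Hy'z'; apply/negP => /eqP E0.
have [ka0|kan] := eqVneq ka 0.
  move: Hyz; rewrite /dot big1 => [|k _]; last by rewrite Hy ka0 !mul0r.
  by move/eqP; rewrite eq_sym oner_eq0.
have [t [Hm Hn]] : exists t, mu' = t * mu /\ nu' = t * nu.
  have [m0|mn0] := eqVneq mu 0.
    move: Hp; rewrite m0 eqxx /= => nn0.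
    exists (nu' / nu); split; last by field.
    rewrite mulr0; apply: (mulfI nn0); rewrite mulr0.
    by move: E0; rewrite /ev m0 mul0r sub0r => /eqP; rewrite oppr_eq0 => /eqP.
  exists (mu' / mu); split; first by field.
  have : mu * nu' = nu * mu' by apply/eqP; rewrite -subr_eq0; apply/eqP.
  move=> E; apply: (mulfI mn0); rewrite E; by field.
have Hr : forall k, y' k = (ka' * t ^+ 3 / ka) * y k.
  move=> k; rewrite Hy Hy' Hm Hn /V.
  case: k => [[|[|[|[|k]]]] ?] //=; by field.
have r0 : ka' * t ^+ 3 / ka = 0.
  rewrite -Hy'z -[LHS]mulr1 -Hyz /dot mulr_sumr; apply: eq_bigr => k _.
  by rewrite Hr mulrA.
move: Hy'z'; rewrite /dot big1 => [|k _]; last by rewrite Hr r0 !mul0r.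
by move/eqP; rewrite eq_sym oner_eq0.
Qed.
Arguments cmx_unit {A B Cf}.
Lemma Ydual (A : 'I_4 -> vec 2) (B : 'I_4 -> vec 3) (Cf : 'I_4 -> vec 4)
  (HT : decomp T23 A B Cf) m l :
  dot (fun k => invmx (cmx Cf) m k) (Cf l) = (m == l)%:R.
Proof.
have := mulVmx (cmx_unit HT); move/matrixP/(_ m l); rewrite !mxE => <-.
by apply: eq_bigr => k _; rewrite mxE.
Qed.
Arguments Ydual {A B Cf}.

Lemma Ydual2 (A : 'I_4 -> vec 2) (B : 'I_4 -> vec 3) (Cf : 'I_4 -> vec 4)
  (HT : decomp T23 A B Cf) k k' :
  \sum_(m < 4) Cf m k * invmx (cmx Cf) m k' = (k == k')%:R.
Proof.
have := mulmxV (cmx_unit HT); move/matrixP/(_ k k'); rewrite !mxE => <-.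
by apply: eq_bigr => m _; rewrite mxE.
Qed.
Arguments Ydual2 {A B Cf}.

Lemma Yhank (A : 'I_4 -> vec 2) (B : 'I_4 -> vec 3) (Cf : 'I_4 -> vec 4)
  (HT : decomp T23 A B Cf) m i j :
  \sum_(k < 4) invmx (cmx Cf) m k * T23 i j k = A m i * B m j.
Proof.
have := @contract 4 A B Cf (row m (invmx (cmx Cf))) i j HT.
under eq_bigr do rewrite mxE.
move=> ->; rewrite -row_mul mulVmx ?(cmx_unit HT) //.
rewrite (bigD1 m) //= big1 => [|l Hl]; rewrite !mxE.
  by rewrite eqxx mulr1 addr0.
by rewrite eq_sym (negbTE Hl) mulr0.
Qed.
Arguments Yhank {A B Cf}.

Lemma Yrow (A : 'I_4 -> vec 2) (B : 'I_4 -> vec 3) (Cf : 'I_4 -> vec 4)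
  (HT : decomp T23 A B Cf) m :
  let Y := invmx (cmx Cf) in
  [/\ Y m k0 = A m i0 * B m j0, Y m k1 = A m i0 * B m j1 & Y m k1 = A m i1 * B m j0] /\
  [/\ Y m k2 = A m i0 * B m j2, Y m k2 = A m i1 * B m j1 & Y m k3 = A m i1 * B m j2].
Proof.
move=> Y; split; split.
- by rewrite -(Yhank HT) sum4 !T23E /=; ring.
- by rewrite -(Yhank HT) sum4 !T23E /=; ring.
- by rewrite -(Yhank HT) sum4 !T23E /=; ring.
- by rewrite -(Yhank HT) sum4 !T23E /=; ring.
- by rewrite -(Yhank HT) sum4 !T23E /=; ring.
- by rewrite -(Yhank HT) sum4 !T23E /=; ring.
Qed.
Arguments Yrow {A B Cf}.

Lemma rowV (A : 'I_4 -> vec 2) (B : 'I_4 -> vec 3) (Cf : 'I_4 -> vec 4)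
  (HT : decomp T23 A B Cf) m :
  exists mu nu ka : C, ((mu != 0) || (nu != 0)) /\
    forall k, invmx (cmx Cf) m k = ka * V mu nu k.
Proof.
case: (Yrow HT m) => [[E0 E1 E1'] [E2 E2' E3]].
have [mu [nu [ka [Hp H]]]] := @veron _ _ _ _ _ _ _ _ _ E0 E1 E1' E2 E2' E3.
exists mu, nu, ka; split => // k; rewrite -H.
by case: (ord4P k) => [| | |] ->.
Qed.
Arguments rowV {A B Cf}.
Lemma dotV (y : vec 4) ka mu nu m1 n1 m2 n2 m3 n3 :
  (forall k, y k = ka * V mu nu k) ->
  dot y (cub m1 n1 m2 n2 m3 n3) = ka * (ev m1 n1 mu nu * ev m2 n2 mu nu * ev m3 n3 mu nu).
Proof. by move=> Hy; rewrite -cubV /dot !sum4 !Hy; ring. Qed.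

Arguments dotV {y ka mu nu m1 n1 m2 n2 m3 n3}.
Arguments indep {y y' z z' mu nu ka mu' nu' ka'}.

Lemma dotB (y z z' : vec 4) g : dot y (fun k => z k - g * z' k) = dot y z - g * dot y z'.
Proof. rewrite /dot !sum4; ring. Qed.

Lemma Delta_ext c c' : (forall k, c k = c' k) -> Delta c = Delta c'.
Proof. by move=> H; rewrite /Delta !H. Qed.

Lemma ev_self m n : ev m n m n = 0.
Proof. rewrite /ev; ring. Qed.

Lemma ord0_k0 : (ord0 : 'I_4) = k0. Proof. exact/val_inj. Qed.

Lemma analysis (A : 'I_4 -> vec 2) (B : 'I_4 -> vec 3) (Cf : 'I_4 -> vec 4)
  (HT : decomp T23 A B Cf) :
  [/\ A k0 i1 * B k0 j0 = A k0 i0 * B k0 j1, A k0 i1 * B k0 j1 = A k0 i0 * B k0 j2,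
      psi (A k0) (B k0) (Cf k0) = 1 & Delta (Cf k0) != 0].
Proof.
set Y := invmx (cmx Cf).
have [[E0 E1 E1'] [E2 E2' E3]] := Yrow HT k0.
split.
- by rewrite -E1' E1.
- by rewrite -E2' E2.
- have := Ydual HT k0 k0; rewrite /dot sum4 eqxx mulr1n /psi !eE -/Y E0 E1 E2 E3 => <-; ring.
have [mu0 [nu0 [ka0 [P0 H0]]]] := rowV HT k0.
have [mu1 [nu1 [ka1 [P1 H1]]]] := rowV HT k1.
have [mu2 [nu2 [ka2 [P2 H2]]]] := rowV HT k2.
have [mu3 [nu3 [ka3 [P3 H3]]]] := rowV HT k3.
have D m l : dot (fun k => Y m k) (Cf l) = (m == l)%:R by apply: Ydual HT m l.
have D1 m : dot (fun k => Y m k) (Cf m) = 1 by rewrite D eqxx.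
have D0 m l : m != l -> dot (fun k => Y m k) (Cf l) = 0 by move=> h; rewrite D (negbTE h).
have g01 : ev mu0 nu0 mu1 nu1 != 0 by apply: (indep P0 H0 H1 (D1 k0) (D0 k1 k0 isT) (D1 k1)).
have g02 : ev mu0 nu0 mu2 nu2 != 0 by apply: (indep P0 H0 H2 (D1 k0) (D0 k2 k0 isT) (D1 k2)).
have g03 : ev mu0 nu0 mu3 nu3 != 0 by apply: (indep P0 H0 H3 (D1 k0) (D0 k3 k0 isT) (D1 k3)).
have g12 : ev mu1 nu1 mu2 nu2 != 0 by apply: (indep P1 H1 H2 (D1 k1) (D0 k2 k1 isT) (D1 k2)).
have g13 : ev mu1 nu1 mu3 nu3 != 0 by apply: (indep P1 H1 H3 (D1 k1) (D0 k3 k1 isT) (D1 k3)).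
have g23 : ev mu2 nu2 mu3 nu3 != 0 by apply: (indep P2 H2 H3 (D1 k2) (D0 k3 k2 isT) (D1 k3)).
set q := cub mu1 nu1 mu2 nu2 mu3 nu3.
set E := ev mu1 nu1 mu0 nu0 * ev mu2 nu2 mu0 nu0 * ev mu3 nu3 mu0 nu0.
have En : E != 0.
  by rewrite /E !mulf_neq0 // evC oppr_eq0.
have ka0n : ka0 != 0.
  apply/negP => /eqP k00; have := D k0 k0.
  rewrite /dot big1 => [|k _]; last by rewrite H0 k00 !mul0r.
  by move/eqP; rewrite eq_sym eqxx oner_eq0.
set g := (ka0 * E)^-1.
have gn : g != 0 by rewrite invr_eq0 mulf_neq0.
set d : vec 4 := fun k => Cf k0 k - g * q k.
have Dd m : dot (fun k => Y m k) d = 0.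
  rewrite /d dotB.
  case: (ord4P m) => [| | |] ->.
  - by rewrite D1 (dotV H0) -/E /g; field; rewrite En ka0n.
  - by rewrite (D0 k1 k0 isT) (dotV H1) ev_self; ring.
  - by rewrite (D0 k2 k0 isT) (dotV H2) ev_self; ring.
  - by rewrite (D0 k3 k0 isT) (dotV H3) ev_self; ring.
have d0 k : d k = 0.
  have -> : d k = \sum_(k' < 4) (k == k')%:R * d k'.
    rewrite (bigD1 k) //= eqxx mul1r big1 ?addr0 // => k' Hk.
    by rewrite eq_sym (negbTE Hk) mul0r.
  under eq_bigr do rewrite -(Ydual2 HT) mulr_suml.
  rewrite exchange_big /= big1 // => m _.
  under eq_bigr do rewrite -mulrA.
  by rewrite -mulr_sumr; have := Dd m; rewrite /dot => ->; rewrite mulr0.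
rewrite (@Delta_ext _ (fun k => g * q k)); last first.
  by move=> k; apply/eqP; rewrite -subr_eq0; apply/eqP; apply: d0.
by rewrite Delta_cub mulf_neq0 ?oppr_eq0 ?expf_neq0 ?mulf_neq0.
Qed.
Lemma root3 (c0 c1 c2 c3 : C) : c3 != 0 ->
  exists r, c0 + c1 * r + c2 * r ^+ 2 + c3 * r ^+ 3 = 0.
Proof.
move=> h.
have [r Hr] := @solve_monicpoly C 3 (fun i => - nth 0 [:: c0; c1; c2] i / c3) isT.
exists r; move: Hr; rewrite !big_ord_recr big_ord0 /= => Hr.
have -> : c0 + c1 * r + c2 * r ^+ 2 + c3 * r ^+ 3 =
  c3 * (r ^+ 3 - (0 + - c0 / c3 * r ^+ 0 + - c1 / c3 * r ^+ 1 + - c2 / c3 * r ^+ 2)).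
  by field.
by rewrite Hr subrr mulr0.
Qed.

Lemma root2 (c0 c1 c2 : C) : c2 != 0 ->
  exists r, c0 + c1 * r + c2 * r ^+ 2 = 0.
Proof.
move=> h.
have [r Hr] := @solve_monicpoly C 2 (fun i => - nth 0 [:: c0; c1] i / c2) isT.
exists r; move: Hr; rewrite !big_ord_recr big_ord0 /= => Hr.
have -> : c0 + c1 * r + c2 * r ^+ 2 =
  c2 * (r ^+ 2 - (0 + - c0 / c2 * r ^+ 0 + - c1 / c2 * r ^+ 1)).
  by field.
by rewrite Hr subrr mulr0.
Qed.

Lemma eq_by_diff (x y z : C) : x - y = z -> z = 0 -> x = y.
Proof. by move=> <- /eqP; rewrite subr_eq0 => /eqP. Qed.

Lemma factor (c : vec 4) : Delta c != 0 ->
  exists g m1 n1 m2 n2 m3 n3, forall k, c k = g * cub m1 n1 m2 n2 m3 n3 k.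
Proof.
move=> hD.
have [c3z|c3n] := eqVneq (c k3) 0.
  move: hD; rewrite /Delta !eE c3z => hD.
  have c2n : c k2 != 0.
    by apply: contraNneq hD => ->; apply/eqP; ring.
  set c0 := c k0; set c1 := c k1; set c2 := c k2.
  have [r1 h1] := @root2 c0 c1 c2 c2n.
  exists c2, 1, r1, 1, (- c1 / c2 - r1), 0, (-1) => k.
  case: (ord4P k) => [| | |] -> ; rewrite /cub /= -/c0 -/c1 -/c2.
  - apply: (@eq_by_diff _ _ (c0 + c1 * r1 + c2 * r1 ^+ 2)); first by field.
    exact: h1.
  - by field.
  - ring.
  - by rewrite c3z; ring.
set c0 := c k0; set c1 := c k1; set c2 := c k2; set c3 := c k3.
have [r1 h1] := @root3 c0 c1 c2 c3 c3n.
set e1 := c2 / c3 + r1; set e0 := c1 / c3 + r1 * e1.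
have [r2 h2] := @root2 e0 e1 1 (oner_neq0 C) .
exists c3, 1, r1, 1, r2, 1, (- e1 - r2) => k.
case: (ord4P k) => [| | |] -> ; rewrite /cub /= -/c0 -/c1 -/c2 -/c3.
- apply: (@eq_by_diff _ _ ((c0 + c1 * r1 + c2 * r1 ^+ 2 + c3 * r1 ^+ 3)
      - c3 * r1 * (e0 + e1 * r2 + 1 * r2 ^+ 2))).
    by rewrite /e0 /e1; field.
  by rewrite h1 h2; ring.
- apply: (@eq_by_diff _ _ (c3 * (e0 + e1 * r2 + 1 * r2 ^+ 2))).
    by rewrite /e0 /e1; field.
  by rewrite h2; ring.
- by rewrite /e1; field.
- ring.
Qed.
Lemma Ha (a : vec 2) i : a i = pa (a i0) (a i1) i.
Proof. by case: (ord2P i) => ->. Qed.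

Lemma bform (a : vec 2) (b : vec 3) : nonzero_vec a ->
  a i1 * b j1 - a i0 * b j2 = 0 -> a i1 * b j0 - a i0 * b j1 = 0 ->
  exists ka, forall j, b j = ka * pb (a i0) (a i1) j.
Proof.
move=> [i Hi] /eqP R1 /eqP R2; move: R1 R2; rewrite !subr_eq0 => /eqP R1 /eqP R2.
have [a0z|a0n] := eqVneq (a i0) 0.
  have a1n : a i1 != 0 by case: (ord2P i) Hi => -> //; rewrite a0z eqxx.
  have b1z : b j1 = 0 by apply: (mulfI a1n); rewrite R1 a0z !mul0r mulr0.
  have b0z : b j0 = 0 by apply: (mulfI a1n); rewrite R2 a0z !mul0r mulr0.
  exists (b j2 / a i1 ^+ 2) => j; rewrite /pb.
  case: (ord3P j) => [| |] -> /=; rewrite ?b0z ?b1z ?a0z; by field.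
exists (b j0 / a i0 ^+ 2) => j; rewrite /pb.
have hb1 : b j1 = a i1 * b j0 / a i0 by rewrite R2; field.
have hb2 : b j2 = a i1 * b j1 / a i0 by rewrite R1; field.
case: (ord3P j) => [| |] -> /=.
- by field.
- by rewrite hb1; field.
- by rewrite hb2 hb1; field.
Qed.

Lemma psi_expr (a : vec 2) (b : vec 3) (c : vec 4) ka g m1 n1 m2 n2 m3 n3 :
  (forall j, b j = ka * pb (a i0) (a i1) j) ->
  (forall k, c k = g * cub m1 n1 m2 n2 m3 n3 k) ->
  psi a b c = ka * (g * (ev m1 n1 (a i0) (a i1) * ev m2 n2 (a i0) (a i1) * ev m3 n3 (a i0) (a i1))).
Proof.
move=> Hb Hc; rewrite -cubV /psi !eE !Hb !Hc /dot sum4 /pb /V /=; ring.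
Qed.
Arguments bform {a b}.
Arguments factor {c}.
Arguments psi_expr {a b c ka g m1 n1 m2 n2 m3 n3}.
Arguments lagrange {m0 n0 m1 n1 m2 n2 m3 n3}.
Arguments rank_sub_lower {lam a b c s}.
Arguments Delta_ext {c c'}.

Lemma reverse (a : vec 2) (b : vec 3) (c : vec 4) : nonzero_vec a ->
  a i1 * b j1 - a i0 * b j2 = 0 -> a i1 * b j0 - a i0 * b j1 = 0 ->
  psi a b c != 0 -> Delta c != 0 -> in_decomp_locus T23 (outer a b c).
Proof.
move=> Ha0 R1 R2 hP hD.
have [ka Hb] := bform Ha0 R1 R2.
have [g [m1 [n1 [m2 [n2 [m3 [n3 Hc]]]]]]] := factor hD.
have hX : - g ^+ 4 * (ev m1 n1 m2 n2 * ev m1 n1 m3 n3 * ev m2 n2 m3 n3) ^+ 2 != 0.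
  by rewrite -Delta_cub -(Delta_ext Hc).
have gn : g != 0 by apply: contraNneq hX => ->; apply/eqP; ring.
have h12 : ev m1 n1 m2 n2 != 0 by apply: contraNneq hX => ->; apply/eqP; ring.
have h13 : ev m1 n1 m3 n3 != 0 by apply: contraNneq hX => ->; apply/eqP; ring.
have h23 : ev m2 n2 m3 n3 != 0 by apply: contraNneq hX => ->; apply/eqP; ring.
set a0 := a i0; set a1 := a i1.
move: (hP); rewrite (psi_expr Hb Hc) !mulf_eq0 !negb_or => /andP [kan /andP [_ /andP [/andP [h10 h20] h30]]].
have h01 : ev a0 a1 m1 n1 != 0 by rewrite evC oppr_eq0.
have h02 : ev a0 a1 m2 n2 != 0 by rewrite evC oppr_eq0.
have h03 : ev a0 a1 m3 n3 != 0 by rewrite evC oppr_eq0.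
have HL := lagrange h01 h02 h03 h12 h13 h23.
exists (psi a b c)^-1, 4%N; split; first exact: rankT; split => //.
split; last first.
  by move=> s Hs; have := rank_sub_lower Hs.
apply: (@rank_le3 _ (pa m1 n1) (pb m1 n1) (wv a0 a1 m2 n2 m3 n3 m1 n1)
                   (pa m2 n2) (pb m2 n2) (wv a0 a1 m1 n1 m3 n3 m2 n2)
                   (pa m3 n3) (pb m3 n3) (wv a0 a1 m1 n1 m2 n2 m3 n3)) => i j k.
rewrite /tsub /tadd /tscale HL.
have -> : outer (pa a0 a1) (pb a0 a1) (wv m1 n1 m2 n2 m3 n3 a0 a1) i j k =
          (psi a b c)^-1 * outer a b c i j k.
  rewrite (psi_expr Hb Hc) /outer Hb Hc (Ha a i) -/a0 -/a1 /wv.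
  field; rewrite kan gn h10 h20 h30 //.
ring.
Qed.
Lemma rel3 (a0 a1 b0 b1 b2 : C) : (a0 != 0) || (a1 != 0) ->
  a1 * b1 - a0 * b2 = 0 -> a1 * b0 - a0 * b1 = 0 -> b1 ^+ 2 - b0 * b2 = 0.
Proof.
move=> /orP [a0n|a1n] d2 d1.
  apply: (mulfI (expf_neq0 2 a0n)); rewrite mulr0.
  have -> : a0 ^+ 2 * (b1 ^+ 2 - b0 * b2) =
    - (a1 * b0 - a0 * b1) * (a0 * b1 + a1 * b0) + a1 * b0 * (a1 * b0 - a0 * b1)
    + a0 * b0 * (a1 * b1 - a0 * b2) by ring.
  by rewrite d1 d2; ring.
apply: (mulfI (expf_neq0 2 a1n)); rewrite mulr0.
have -> : a1 ^+ 2 * (b1 ^+ 2 - b0 * b2) =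
  a1 * b1 * (a1 * b1 - a0 * b2) - a1 * b2 * (a1 * b0 - a0 * b1) by ring.
by rewrite d1 d2; ring.
Qed.

Lemma nz_a (a : vec 2) : nonzero_vec a -> (a i0 != 0) || (a i1 != 0).
Proof. by case=> i; case: (ord2P i) => -> ->; rewrite ?orbT. Qed.

Arguments rankT_uniq {r}.
Arguments ext_decomp {T lam a b c s}.
Arguments analysis {A B Cf}.
Arguments reverse {a b c}.
Arguments rel3 {a0 a1 b0 b1 b2}.
Arguments nz_a {a}.

Theorem mainTheorem11 (a : vec 2) (b : vec 3) (c : vec 4) :
  nonzero_vec a -> nonzero_vec b -> nonzero_vec c ->
  (in_decomp_locus T23 (outer a b c) <->
   [/\ b (e2 1) ^+ 2 - b (e2 0) * b (e2 2) = 0,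
       a (e1 1) * b (e2 1) - a (e1 0) * b (e2 2) = 0,
       a (e1 1) * b (e2 0) - a (e1 0) * b (e2 1) = 0,
       psi a b c != 0 &
       Delta c != 0]).
Proof.
move=> Ha Hb Hc; rewrite !eE; split.
  case=> lam [r [Hr [_ Hs]]].
  have r4 := rankT_uniq Hr; rewrite r4 /= in Hs.
  case: Hs => Hle _.
  have [A [B [Cf [HT HA HB HC]]]] := ext_decomp Hle.
  rewrite ord0_k0 in HA HB HC.
  have [R1 R2 P1 D1] := analysis HT.
  rewrite HA HB HC /= in R1 R2 P1 D1.
  have Pl : lam * psi a b c = 1 by rewrite -P1 /psi; ring.
  have lamn : lam != 0 by apply: contra_eq_neq Pl => ->; rewrite mul0r eq_sym oner_neq0.
  have psin : psi a b c != 0 by apply: contra_eq_neq Pl => ->; rewrite mulr0 eq_sym oner_neq0.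
  have d1 : a i1 * b j0 - a i0 * b j1 = 0.
    by apply: (mulfI lamn); rewrite mulr0 mulrBr !mulrA R1 subrr.
  have d2 : a i1 * b j1 - a i0 * b j2 = 0.
    by apply: (mulfI lamn); rewrite mulr0 mulrBr !mulrA R2 subrr.
  split => //; exact: rel3 (nz_a Ha) d2 d1.
case=> _ h2 h3 hP hD.
exact: reverse Ha h2 h3 hP hD.
Qed.
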